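(* Let $\mathfrak{g}$ be a complex simple Lie algebra with Weyl group $W$, and let $\lambda_1,\lambda_2,\lambda_3,\lambda_4$ be dominant integral weights such that $\lambda_1+\lambda_2=\lambda=\lambda_3+\lambda_4$ and, for every positive root $\alpha$, $|(\lambda_1-\lambda_2)(\alpha^\vee)|\le|(\lambda_3-\lambda_4)(\alpha^\vee)|$. Suppose in addition that $P_{\lambda_1,\lambda_2}\subseteq C_f$ and $P_{\lambda_3,\lambda_4}\subseteq C_f$. Then $P_{\lambda_3,\lambda_4}\subseteq P_{\lambda_1,\lambda_2}$.
   Context: For dominant weights $\mu,\nu$, $P_{\mu,\nu}=\operatorname{Conv}\{\mu+w\nu : w\in W\}\subset P\otimes\mathbb{R}$, where $P$ is the weight lattice and $\operatorname{Conv}$ denotes convex hull. $C_f=\{x\in P\otimes\mathbb{R} : x(\alpha_i^\vee)\ge 0 \text{ for all simple coroots } \alpha_i^\vee\}$ is the (closed) fundamental Weyl chamber. $\alpha^\vee$ denotes the coroot of the root $\alpha$. *)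

(* Defs.v *)
From HB Require Import structures.
From mathcomp Require Import all_boot all_order all_algebra.
From mathcomp Require Import reals.
Set Implicit Arguments. Unset Strict Implicit. Unset Printing Implicit Defensive.
Import Order.TTheory GRing.Theory Num.Theory.
Local Open Scope ring_scope.

(* The root system of a complex simple Lie algebra, realized in the
   Euclidean space R^n = 'rV[R]_n (n = rank) with the standard inner product
   (the real span of the roots, i.e. P (x) R, with the Killing-form-induced
   inner product). *)
Section RootData.
Variables (R : realType) (n : nat).
Notation vec := 'rV[R]_n.

Definition dot (u v : vec) : R := (u *m v^T) 0 0.

(* x(a^vee) = 2 (x,a)/(a,a) *)
Definition pairing (x a : vec) : R := 2 * dot x a / dot a a.

Definition refl (a x : vec) : vec := x - pairing x a *: a.

(* irreducible reduced crystallographic root system spanning R^n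
   (= root system of a complex simple Lie algebra of rank n) *)
Record is_simple_root_system (Phi : seq vec) : Prop := {
  rs_nonempty : Phi != [::];
  rs_nonzero : 0 \notin Phi;
  rs_span : forall x : vec, exists c : 'I_(size Phi) -> R,
      x = \sum_(i < size Phi) c i *: Phi`_i;
  rs_refl : forall a b, a \in Phi -> b \in Phi -> refl a b \in Phi;
  rs_cryst : forall a b, a \in Phi -> b \in Phi ->
      exists z : int, pairing b a = z%:~R;
  rs_reduced : forall a (c : R), a \in Phi -> c *: a \in Phi -> c = 1 \/ c = -1;
  rs_irred : forall P : vec -> bool,
      (forall a b, a \in Phi -> b \in Phi -> P a -> ~~ P b -> dot a b = 0) ->
      (forall a, a \in Phi -> P a) \/ (forall a, a \in Phi -> ~~ P a)
}.

Record is_base (Phi Delta : seq vec) : Prop := {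
  base_sub : {subset Delta <= Phi};
  base_indep : forall c : 'I_(size Delta) -> R,
      \sum_(i < size Delta) c i *: Delta`_i = 0 -> forall i, c i = 0;
  base_decomp : forall a, a \in Phi -> exists c : 'I_(size Delta) -> int,
      a = \sum_(i < size Delta) (c i)%:~R *: Delta`_i /\
      ((forall i, 0 <= c i) \/ (forall i, c i <= 0))
}.

Definition positive_root (Phi Delta : seq vec) (a : vec) : Prop :=
  a \in Phi /\ exists c : 'I_(size Delta) -> int,
    a = \sum_(i < size Delta) (c i)%:~R *: Delta`_i /\ forall i, 0 <= c i.

Definition weyl_elt (Phi : seq vec) (w : vec -> vec) : Prop :=
  exists s : seq vec, {subset s <= Phi} /\
    forall x, w x = foldr (fun a y => refl a y) x s.

Definition is_weight (Phi : seq vec) (x : vec) : Prop :=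
  forall a, a \in Phi -> exists z : int, pairing x a = z%:~R.

Definition fund_chamber (Delta : seq vec) (x : vec) : Prop :=
  forall a, a \in Delta -> 0 <= pairing x a.

Definition dominant_weight (Phi Delta : seq vec) (x : vec) : Prop :=
  is_weight Phi x /\ fund_chamber Delta x.

Definition conv (S : vec -> Prop) (x : vec) : Prop :=
  exists (k : nat) (p : 'I_k -> vec) (t : 'I_k -> R),
    (forall i, S (p i)) /\ (forall i, 0 <= t i) /\
    \sum_(i < k) t i = 1 /\ x = \sum_(i < k) t i *: p i.

Definition Ppoly (Phi : seq vec) (mu nu : vec) : vec -> Prop :=
  conv (fun y => exists w, weyl_elt Phi w /\ y = mu + w nu).

Definition psubset (A B : vec -> Prop) : Prop := forall x, A x -> B x.

End RootData.

(* Main.v *)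
Require Import Defs.
From HB Require Import structures.
From mathcomp Require Import all_boot all_order all_algebra.
From mathcomp Require Import reals.
From mathcomp Require Import ring lra zify.
From Stdlib Require Import Classical.
Set Implicit Arguments. Unset Strict Implicit. Unset Printing Implicit Defensive.
Import Order.TTheory GRing.Theory Num.Theory.
Local Open Scope ring_scope.

Section Dot.
Variables (R : realType) (n : nat).
Implicit Types (u v w x y a b : 'rV[R]_n).

Lemma dotE u v : dot u v = \sum_j u 0 j * v 0 j.
Proof. by rewrite /dot !mxE; apply: eq_bigr => j _; rewrite mxE. Qed.

Lemma dotC u v : dot u v = dot v u.
Proof. by rewrite !dotE; apply: eq_bigr => j _; rewrite mulrC. Qed.

Lemma dotDl u v w : dot (u + v) w = dot u w + dot v w.
Proof. by rewrite !dotE -big_split; apply: eq_bigr => j _; rewrite mxE mulrDl. Qed.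

Lemma dotZl c u w : dot (c *: u) w = c * dot u w.
Proof. by rewrite !dotE mulr_sumr; apply: eq_bigr => j _; rewrite mxE mulrA. Qed.

Lemma dotNl u w : dot (- u) w = - dot u w.
Proof. by rewrite -scaleN1r dotZl mulN1r. Qed.

Lemma dotBl u v w : dot (u - v) w = dot u w - dot v w.
Proof. by rewrite dotDl dotNl. Qed.

Lemma dot0l w : dot 0 w = 0.
Proof. by rewrite -(scale0r 0) dotZl mul0r. Qed.

Lemma dotDr u v w : dot w (u + v) = dot w u + dot w v.
Proof. by rewrite dotC dotDl !(dotC w). Qed.
Lemma dotZr c u w : dot w (c *: u) = c * dot w u.
Proof. by rewrite dotC dotZl dotC. Qed.
Lemma dotNr u w : dot w (- u) = - dot w u.
Proof. by rewrite dotC dotNl dotC. Qed.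
Lemma dotBr u v w : dot w (u - v) = dot w u - dot w v.
Proof. by rewrite dotDr dotNr. Qed.

Lemma dot_sumr k (F : 'I_k -> 'rV[R]_n) w :
  dot w (\sum_(i < k) F i) = \sum_(i < k) dot w (F i).
Proof.
elim: k F => [|k IH] F; first by rewrite !big_ord0 dotC dot0l.
by rewrite !big_ord_recr /= dotDr IH.
Qed.

Lemma dot_ge0 u : 0 <= dot u u.
Proof. by rewrite dotE; apply: sumr_ge0 => j _; rewrite -expr2 sqr_ge0. Qed.

Lemma dot_gt0 u : u != 0 -> 0 < dot u u.
Proof.
move=> nz; rewrite lt_def dot_ge0 andbT; apply/negP => /eqP H.
move/eqP: nz; apply; apply/rowP => j; rewrite mxE.
have /psumr_eq0P H1 : \sum_j u 0 j * u 0 j = 0 by rewrite -dotE.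
have := H1 (fun i _ => ltac:(by rewrite -expr2 sqr_ge0)) j isT.
by rewrite -expr2 => /eqP; rewrite sqrf_eq0 => /eqP ->.
Qed.
End Dot.

Section Refl.
Variables (R : realType) (n : nat).
Implicit Types (u v w x y a b : 'rV[R]_n).

Lemma dotaa_neq0 a : a != 0 -> dot a a != 0.
Proof. by move/dot_gt0 => H; rewrite gt_eqF. Qed.

Lemma pairingDl x y a : pairing (x + y) a = pairing x a + pairing y a.
Proof. rewrite /pairing dotDl mulrDr mulrDl. reflexivity. Qed.
Lemma pairingZl c x a : pairing (c *: x) a = c * pairing x a.
Proof. by rewrite /pairing dotZl !mulrA (mulrC 2 c). Qed.
Lemma pairingNl x a : pairing (- x) a = - pairing x a.
Proof. by rewrite -scaleN1r pairingZl mulN1r. Qed.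
Lemma pairingBl x y a : pairing (x - y) a = pairing x a - pairing y a.
Proof. by rewrite pairingDl pairingNl. Qed.
Lemma pairing_self a : a != 0 -> pairing a a = 2.
Proof. by move=> /dotaa_neq0 H; rewrite /pairing mulfK. Qed.

Lemma refl_add a x y : refl a (x + y) = refl a x + refl a y.
Proof. by rewrite /refl pairingDl scalerDl opprD addrACA. Qed.
Lemma refl_scale a c x : refl a (c *: x) = c *: refl a x.
Proof. by rewrite /refl pairingZl scalerBr scalerA. Qed.
Lemma refl_opp a x : refl a (- x) = - refl a x.
Proof. by rewrite -scaleN1r refl_scale scaleN1r. Qed.
Lemma refl_sub a x y : refl a (x - y) = refl a x - refl a y.
Proof. by rewrite refl_add refl_opp. Qed.
Lemma refl0 a : refl a 0 = 0.
Proof. by rewrite /refl /pairing dot0l mulr0 mul0r scale0r subr0. Qed.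
Lemma refl_sum a k (F : 'I_k -> 'rV[R]_n) :
  refl a (\sum_(i < k) F i) = \sum_(i < k) refl a (F i).
Proof.
elim: k F => [|k IH] F; first by rewrite !big_ord0 refl0.
by rewrite !big_ord_recr /= refl_add IH.
Qed.

Lemma refl_self a : a != 0 -> refl a a = - a.
Proof.
move=> nz; rewrite /refl pairing_self //.
by rewrite scalerDl scale1r opprD addrA subrr sub0r.
Qed.

Lemma pairing_refll a x : a != 0 -> pairing (refl a x) a = - pairing x a.
Proof.
move=> nz; rewrite /refl pairingBl pairingZl pairing_self //.
by rewrite mulrDr mulr1 opprD addrA subrr sub0r.
Qed.

Lemma reflK a x : a != 0 -> refl a (refl a x) = x.
Proof.
move=> nz; rewrite [refl a x]/refl refl_sub refl_scale refl_self //.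
by rewrite /refl scalerN opprK subrK.
Qed.

Lemma dot_refl a x y : a != 0 -> dot (refl a x) (refl a y) = dot x y.
Proof.
move=> /dotaa_neq0 H; rewrite /refl dotBl !dotBr !dotZl !dotZr /pairing.
rewrite (dotC a y); field; exact: H.
Qed.

Lemma pairing_refl a x y : a != 0 -> pairing (refl a x) (refl a y) = pairing x y.
Proof. by move=> nz; rewrite /pairing !dot_refl. Qed.

Lemma refl_conj a b y : a != 0 -> refl (refl a b) y = refl a (refl b (refl a y)).
Proof.
move=> nz; rewrite [refl (refl a b) y]/refl refl_sub refl_scale reflK //.
by congr (_ - _ *: _); rewrite -(pairing_refl (refl a y) b nz) reflK.
Qed.

Lemma refl_neg a x : refl (- a) x = refl a x.
Proof.
by rewrite /refl /pairing dotNr dotNl dotNr opprK mulrN mulNr scaleNr scalerN opprK.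
Qed.
End Refl.

Section Act.
Variables (R : realType) (n : nat).
Implicit Types (u v w x y a b : 'rV[R]_n) (s r : seq 'rV[R]_n).

Definition act s x := foldr (fun a y => refl a y) x s.

Lemma act_cat s1 s2 x : act (s1 ++ s2) x = act s1 (act s2 x).
Proof. by rewrite /act foldr_cat. Qed.

Lemma act_add s x y : act s (x + y) = act s x + act s y.
Proof. by elim: s => //= a s IH; rewrite IH refl_add. Qed.
Lemma act_scale s c x : act s (c *: x) = c *: act s x.
Proof. by elim: s => //= a s IH; rewrite IH refl_scale. Qed.
Lemma act_opp s x : act s (- x) = - act s x.
Proof. by elim: s => //= a s IH; rewrite IH refl_opp. Qed.

Lemma act_revK s x : all (fun a => a != 0) s -> act (rev s) (act s x) = x.
Proof.
elim: s x => //= a s IH x /andP[nz H].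
by rewrite rev_cons -cats1 act_cat /= reflK // IH.
Qed.

Lemma act_Krev s x : all (fun a => a != 0) s -> act s (act (rev s) x) = x.
Proof.
move=> H; rewrite -{1}(revK s) act_revK //.
by rewrite all_rev.
Qed.

Lemma act_dot s x y : all (fun a => a != 0) s -> dot (act s x) (act s y) = dot x y.
Proof. by elim: s => //= a s IH /andP[nz H]; rewrite dot_refl // IH. Qed.

Lemma act_pairing s x y : all (fun a => a != 0) s ->
  pairing (act s x) (act s y) = pairing x y.
Proof. by move=> H; rewrite /pairing !act_dot. Qed.

Lemma act_conj r a y : all (fun a => a != 0) r ->
  refl (act r a) y = act r (refl a (act (rev r) y)).
Proof.
elim: r y => //= b r IH y /andP[nz H].
rewrite refl_conj // IH // rev_cons -cats1 act_cat /=.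
done.
Qed.
End Act.

Section Roots.
Variables (R : realType) (n : nat) (Phi Delta : seq 'rV[R]_n).
Hypothesis RS : is_simple_root_system Phi.
Hypothesis BS : is_base Phi Delta.
Implicit Types (u v w x y a b : 'rV[R]_n) (s r : seq 'rV[R]_n).
Local Notation m := (size Delta).
Local Notation posr := (positive_root Phi Delta).
Local Notation lin c := (\sum_(i < size Delta) (c i)%:~R *: Delta`_i).

Lemma Phi_nz a : a \in Phi -> a != 0.
Proof. by apply: contraTneq => ->; exact: (rs_nonzero RS). Qed.

Lemma Delta_Phi : {subset Delta <= Phi}.
Proof. exact: (base_sub BS). Qed.

Lemma all_nz s : {subset s <= Phi} -> all (fun a => a != 0) s.
Proof. by move=> H; apply/allP => a /H /Phi_nz. Qed.

Lemma act_Phi s a : {subset s <= Phi} -> a \in Phi -> act s a \in Phi.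
Proof.
elim: s => //= b s IH H Ha; apply: (rs_refl RS); first by apply: H; rewrite inE eqxx.
by apply: IH => // x Hx; apply: H; rewrite inE Hx orbT.
Qed.

Lemma Phi_opp a : a \in Phi -> - a \in Phi.
Proof. by move=> Ha; rewrite -refl_self ?Phi_nz //; apply: (rs_refl RS). Qed.

Lemma Delta_nth (i : 'I_m) : Delta`_i \in Delta.
Proof. exact: mem_nth. Qed.

Lemma indep_int (c d : 'I_m -> int) : lin c = lin d -> forall i, c i = d i.
Proof.
move=> E i; apply/eqP; rewrite -subr_eq0 -(intr_eq0 R); apply/eqP.
rewrite intrB.
apply: (base_indep BS (c := fun k => (c k)%:~R - (d k)%:~R)) => /=.
under eq_bigr => k _ do rewrite scalerBl.
by rewrite sumrB E subrr.
Qed.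

Lemma pairing_ge0E x a : a != 0 -> (0 <= pairing x a) = (0 <= dot x a).
Proof.
move=> /dot_gt0 H; rewrite /pairing -mulrA pmulr_rge0 //.
by rewrite pmulr_lge0 // invr_gt0.
Qed.

Lemma pairing_gt0E x a : a != 0 -> (0 < pairing x a) = (0 < dot x a).
Proof.
move=> /dot_gt0 H; rewrite /pairing -mulrA pmulr_rgt0 //.
by rewrite pmulr_lgt0 // invr_gt0.
Qed.

Lemma posr_Phi a : posr a -> a \in Phi.
Proof. by case. Qed.

Lemma posr_Delta a : a \in Delta -> posr a.
Proof.
move=> Ha; split; first exact: Delta_Phi.
have Hi : (index a Delta < m)%N by rewrite index_mem.
pose j : 'I_m := Ordinal Hi.
exists (fun i => if i == j then 1 else 0); split; last by move=> i; case: ifP.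
rewrite (bigD1 j) //= eqxx big1 => [|i /negbTE ->]; last by rewrite scale0r.
by rewrite scale1r addr0 nth_index.
Qed.

Lemma posr_dot d g : fund_chamber Delta d -> posr g -> 0 <= dot d g.
Proof.
move=> Hd [_ [c [-> Hc]]]; rewrite dot_sumr; apply: sumr_ge0 => i _.
rewrite dotZr mulr_ge0 //; first by rewrite ler0z.
rewrite -pairing_ge0E; first by apply: Hd; exact: Delta_nth.
by apply: Phi_nz; apply: Delta_Phi; exact: Delta_nth.
Qed.

Lemma refl_coef (c : 'I_m -> int) (j : 'I_m) (z : int) :
  lin c - z%:~R *: Delta`_j =
  lin (fun i => c i - (if i == j then z else 0)).
Proof.
under [RHS]eq_bigr => k _ do rewrite intrB scalerBl.
rewrite sumrB; congr (_ - _).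
rewrite (bigD1 j) //= eqxx big1 ?addr0 // => i /negbTE ->.
by rewrite scale0r.
Qed.

Lemma refl_posr_coef (g : 'rV[R]_n) (c : 'I_m -> int) (j : 'I_m) (z : int) :
  g \in Phi -> g = lin c -> (forall i, 0 <= c i) -> g != Delta`_j ->
  pairing g Delta`_j = z%:~R ->
  forall i, 0 <= c i - (if i == j then z else 0).
Proof.
move=> gP gE cP gnj pz.
have bP : Delta`_j \in Phi by apply: Delta_Phi; exact: Delta_nth.
have rP : refl Delta`_j g \in Phi by apply: (rs_refl RS).
have rE : refl Delta`_j g = lin (fun i => c i - (if i == j then z else 0)).
  by rewrite -refl_coef /refl pz -gE.
have /existsP [i /andP[ij ci]] : [exists i, (i != j) && (0 < c i)].
  apply: contraT; rewrite negb_exists => /forallP H.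
  have gE' : g = (c j)%:~R *: Delta`_j.
    rewrite gE (bigD1 j) //= big1 ?addr0 // => i ij.
    have := H i; rewrite ij /= => /negbTE ci.
    have -> : c i = 0 by apply/eqP; rewrite eq_le cP andbT leNgt ci.
    by rewrite scale0r.
  have H2 : (c j)%:~R *: Delta`_j \in Phi by rewrite -gE'.
  have [E|E] := rs_reduced RS bP H2.
    by move: gnj; rewrite gE' E scale1r eqxx.
  have := cP j; rewrite -(ler0z R) E. lra.
have [e [eE [ep|en]]] := base_decomp BS rP.
  move=> k; have /= <- := indep_int (etrans (esym eE) rE) k; exact: ep.
exfalso; have := en i; have /= -> := indep_int (etrans (esym eE) rE) i.
by rewrite (negbTE ij) subr0 leNgt ci.
Qed.

Lemma posr_coef g : posr g -> exists c : 'I_m -> int, g = lin c /\ forall i, 0 <= c i.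
Proof. by case. Qed.

Lemma refl_posr b g : b \in Delta -> posr g -> g != b -> posr (refl b g).
Proof.
move=> bD [gP [c [gE cP]]] gb.
have Hi : (index b Delta < m)%N by rewrite index_mem.
pose j : 'I_m := Ordinal Hi.
have bj : Delta`_j = b by rewrite /= nth_index.
have [z pz] := rs_cryst RS (Delta_Phi bD) gP.
split; first by apply: (rs_refl RS) => //; exact: Delta_Phi.
exists (fun i => c i - (if i == j then z else 0)); split.
  by rewrite -refl_coef /refl bj pz -gE.
by apply: (refl_posr_coef gP gE cP); rewrite bj.
Qed.

Lemma find_i g (c : 'I_m -> int) : g \in Phi -> g = lin c -> (forall i, 0 <= c i) ->
  exists2 i : 'I_m, 0 < c i & 0 < dot g Delta`_i.
Proof.
move=> gP gE cP.
have H0 : 0 < dot g g by apply: dot_gt0; exact: Phi_nz.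
have E : dot g g = \sum_(i < m) (c i)%:~R * dot g Delta`_i.
  by rewrite {2}gE dot_sumr; apply: eq_bigr => i _; rewrite dotZr.
apply: NNPP => H; move: H0; rewrite E; apply/negP; rewrite -leNgt.
apply: sumr_le0 => i _.
have := cP i; rewrite le_eqVlt => /orP[/eqP <-|ci]; first by rewrite mul0r.
rewrite mulr_ge0_le0 ?ler0z ?(ltW ci) //.
rewrite leNgt; apply/negP => di; apply: H; exists i => //.
Qed.

Lemma sum_ge (c : 'I_m -> int) i : (forall i, 0 <= c i) -> c i <= \sum_(k < m) c k.
Proof.
move=> cP; rewrite (bigD1 i) //= lerDl; apply: sumr_ge0 => k _; exact: cP.
Qed.

Lemma posr_conj_aux N g (c : 'I_m -> int) : g \in Phi -> g = lin c ->
  (forall i, 0 <= c i) -> \sum_(k < m) c k < N%:Z ->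
  exists (u : seq 'rV[R]_n) (a : 'rV[R]_n), {subset u <= Delta} /\ a \in Delta /\ g = act u a.
Proof.
elim: N g c => [|N IH] g c gP gE cP cN.
  by move: cN; rewrite ltNge sumr_ge0.
have [i ci di] := find_i gP gE cP.
have iD := Delta_nth i.
have [gi|gi] := eqVneq g Delta`_i.
  by exists [::], Delta`_i; split => //.
have [z pz] := rs_cryst RS (Delta_Phi iD) gP.
have z0 : 0 < z.
  rewrite -(ltr0z R) -pz pairing_gt0E //; apply: Phi_nz; exact: Delta_Phi.
have cP' := refl_posr_coef gP gE cP gi pz.
have rP : refl Delta`_i g \in Phi by apply: (rs_refl RS) => //; exact: Delta_Phi.
have rE : refl Delta`_i g = lin (fun k => c k - (if k == i then z else 0)).
  by rewrite -refl_coef /refl pz -gE.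
have sE : \sum_(k < m) (c k - (if k == i then z else 0)) = \sum_(k < m) c k - z.
  rewrite sumrB; congr (_ - _); rewrite (bigD1 i) //= ?eqxx big1 ?addr0 // => k /negbTE -> //.
have cN' : \sum_(k < m) (c k - (if k == i then z else 0)) < N%:Z.
  rewrite sE; move: cN; rewrite intS. lia.
have [u [a [uD [aD E]]]] := IH _ _ rP rE cP' cN'.
exists (Delta`_i :: u), a; split.
  by move=> x; rewrite inE => /orP[/eqP ->|/uD].
by split => //=; rewrite -E reflK //; apply: Phi_nz; exact: Delta_Phi.
Qed.

Lemma posr_conj g : posr g ->
  exists (u : seq 'rV[R]_n) (a : 'rV[R]_n), {subset u <= Delta} /\ a \in Delta /\ g = act u a.
Proof.
move=> [gP [c [gE cP]]].
have H : 0 <= \sum_(k < m) c k by apply: sumr_ge0 => k _; exact: cP k.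
set S := \sum_(k < m) c k in H *.
have := posr_conj_aux (N := `|S|.+1) gP gE cP; apply.
rewrite intS abszE ger0_norm //. lia.
Qed.

Lemma subD_nz s : {subset s <= Delta} -> all (fun a => a != 0) s.
Proof. by move=> H; apply: all_nz => x /H /Delta_Phi. Qed.

Lemma deletion s a : {subset s <= Delta} -> a \in Delta -> ~ posr (act s a) ->
  exists s', {subset s' <= Delta} /\ (size s').+1 = size s /\
     forall x, act s (refl a x) = act s' x.
Proof.
elim: s => [|b r IH] sD aD np /=.
  by exfalso; apply: np; exact: posr_Delta.
have bD : b \in Delta by apply: sD; rewrite inE eqxx.
have rD : {subset r <= Delta} by move=> x Hx; apply: sD; rewrite inE Hx orbT.
have bnz : b != 0 by apply: Phi_nz; exact: Delta_Phi.
case: (classic (posr (act r a))) => [pr|npr].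
  have gb : act r a = b.
    apply: NNPP => /eqP gb; apply: np => /=; exact: refl_posr.
  exists r; split => //; split => // x.
  have := act_conj a (act r x) (subD_nz rD).
  rewrite act_revK ?subD_nz // gb => <-.
  by rewrite reflK.
have [r' [r'D [sz E]]] := IH rD aD npr.
exists (b :: r'); split.
  by move=> x; rewrite inE => /orP[/eqP ->|/r'D].
by split; [rewrite /= sz|move=> x /=; rewrite E].
Qed.

Definition minimal t := {subset t <= Delta} /\
  forall t', {subset t' <= Delta} -> (forall x, act t' x = act t x) -> (size t <= size t')%N.

Lemma minimal_pos a r : minimal (a :: r) -> posr (act (rev r) a).
Proof.
move=> [tD tmin]; apply: NNPP => np.
have aD : a \in Delta by apply: tD; rewrite inE eqxx.
have rD : {subset r <= Delta} by move=> x Hx; apply: tD; rewrite inE Hx orbT.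
have rrD : {subset rev r <= Delta} by move=> x; rewrite mem_rev => /rD.
have anz : a != 0 by apply: Phi_nz; exact: Delta_Phi.
have [s' [s'D [sz E]]] := deletion rrD aD np.
have H : forall x, act (rev s') x = act (a :: r) x.
  move=> x; rewrite -{2}(act_Krev x (subD_nz s'D)) -E /=.
  by rewrite act_Krev ?subD_nz // reflK.
move: sz; rewrite size_rev => sz.
have s'rD : {subset rev s' <= Delta} by move=> x; rewrite mem_rev => /s'D.
have := tmin (rev s') s'rD H; rewrite size_rev /=.
lia.
Qed.

Lemma simple_word s : {subset s <= Phi} ->
  exists t, {subset t <= Delta} /\ forall x, act t x = act s x.
Proof.
elim: s => [|a s IH] sP; first by exists [::].
have aP : a \in Phi by apply: sP; rewrite inE eqxx.
have [t [tD tE]] : exists t, {subset t <= Delta} /\ forall x, act t x = act s x.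
  by apply: IH => x Hx; apply: sP; rewrite inE Hx orbT.
have [b [bpos bE]] : exists b, posr b /\ refl b =1 refl a.
  have [c [cE [cp|cn]]] := base_decomp BS aP.
    by exists a; split => //; split => //; exists c.
  exists (- a); split; last by move=> x; rewrite refl_neg.
  split; first exact: Phi_opp.
  exists (fun i => - c i); split; last by move=> i; rewrite oppr_ge0.
  by rewrite cE -sumrN; apply: eq_bigr => i _; rewrite intrN scaleNr.
have [u [al [uD [alD bU]]]] := posr_conj bpos.
exists (u ++ al :: rev u ++ t); split.
  move=> x; rewrite mem_cat inE mem_cat mem_rev => /or3P[/uD|/eqP ->|/orP[/uD|/tD]] //.
move=> x; rewrite !act_cat /= -bE bU act_conj ?subD_nz //.
by rewrite act_cat tE.
Qed.

Lemma orbit_step (K : 'rV[R]_n -> Prop) d b a :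
  (forall y, K y -> K (refl a y)) ->
  (forall y t, K y -> 0 <= t <= 1 -> K (y - (t * pairing y a) *: a)) ->
  a != 0 -> 0 <= pairing d a -> 0 <= pairing b a -> K (d + b) -> K (d + refl a b).
Proof.
move=> Kr Kp anz pd pb Kdb.
have Ky := Kr _ Kdb; rewrite refl_add in Ky.
have py : pairing (refl a d + refl a b) a = - (pairing d a + pairing b a).
  by rewrite pairingDl !pairing_refll // opprD.
have [z|nz] := eqVneq (pairing d a + pairing b a) 0.
  have pd0 : pairing d a = 0 by lra.
  by move: Ky; rewrite {1}/refl pd0 scale0r subr0.
have pos : 0 < pairing d a + pairing b a by rewrite lt_def nz addr_ge0.
have := Kp _ (pairing d a / (pairing d a + pairing b a)) Ky.
rewrite py mulrN divfK // scaleNr opprK /refl.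
have -> : d - pairing d a *: a + (b - pairing b a *: a) + pairing d a *: a =
   d + (b - pairing b a *: a) by rewrite addrAC subrK.
apply; apply/andP; split; first by rewrite divr_ge0 // addr_ge0.
by rewrite ler_pdivrMr // mul1r lerDl.
Qed.

Lemma orbit_all (K : 'rV[R]_n -> Prop) d l :
  (forall a y, a \in Phi -> K y -> K (refl a y)) ->
  (forall a y t, a \in Phi -> K y -> 0 <= t <= 1 -> K (y - (t * pairing y a) *: a)) ->
  fund_chamber Delta d -> fund_chamber Delta l -> K (d + l) ->
  forall t, {subset t <= Delta} -> K (d + act t l).
Proof.
move=> Kr Kp fd fl K0 t.
move: {2}(size t) (leqnn (size t)) => N; elim: N t => [|N IH] t.
  by rewrite leqn0 => /nilP -> _.
move=> sz tD.
case: (classic (minimal t)) => [mt|nmt]; last first.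
  have [t' [t'D [t'E lt]]] : exists t', {subset t' <= Delta} /\
      (forall x, act t' x = act t x) /\ (size t' < size t)%N.
    apply: NNPP => H; apply: nmt; split => // t' t'D t'E.
    rewrite leqNgt; apply/negP => lt; apply: H; exists t'; by split.
  rewrite -t'E; apply: IH => //; rewrite -ltnS; exact: leq_trans lt sz.
case: t mt sz tD => [|a r] mt sz tD /=; first by rewrite /act.
have aD : a \in Delta by apply: tD; rewrite inE eqxx.
have rD : {subset r <= Delta} by move=> x Hx; apply: tD; rewrite inE Hx orbT.
have anz : a != 0 by apply: Phi_nz; exact: Delta_Phi.
apply: orbit_step => //.
- by move=> y; apply: Kr; exact: Delta_Phi.
- by move=> y t'; apply: Kp; exact: Delta_Phi.
- exact: fd.
- have pr := minimal_pos mt.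
  have rrnz : all (fun a => a != 0) (rev r) by rewrite all_rev subD_nz.
  rewrite -(act_pairing _ _ rrnz) act_revK ?subD_nz //.
  rewrite pairing_ge0E; first exact: posr_dot.
  exact/Phi_nz/posr_Phi.
- by apply: IH.
Qed.
End Roots.

Section Conv.
Variables (R : realType) (n : nat).
Implicit Types (x y v : 'rV[R]_n) (S T : 'rV[R]_n -> Prop).

Definition wsum S (s : R) x := exists (k : nat) (p : 'I_k -> 'rV[R]_n) (t : 'I_k -> R),
    (forall i, S (p i)) /\ (forall i, 0 <= t i) /\
    \sum_(i < k) t i = s /\ x = \sum_(i < k) t i *: p i.

Lemma wsum0 S : wsum S 0 0.
Proof.
exists 0%N, (fun _ => 0), (fun _ => 0); split; first by case.
by split; [case|rewrite !big_ord0].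
Qed.

Lemma wsum_add S s1 s2 x1 x2 : wsum S s1 x1 -> wsum S s2 x2 -> wsum S (s1 + s2) (x1 + x2).
Proof.
move=> [k1 [p1 [t1 [P1 [T1 [S1 X1]]]]]] [k2 [p2 [t2 [P2 [T2 [S2 X2]]]]]].
pose p (i : 'I_(k1 + k2)) := match split i with inl j => p1 j | inr j => p2 j end.
pose t (i : 'I_(k1 + k2)) := match split i with inl j => t1 j | inr j => t2 j end.
have L j : split (lshift k2 j) = inl j := unsplitK (inl j).
have Rr j : split (rshift k1 j) = inr j := unsplitK (inr j).
exists (k1 + k2)%N, p, t; split; first by move=> i; rewrite /p; case: (split i).
split; first by move=> i; rewrite /t; case: (split i).
split.
  rewrite big_split_ord /= -S1 -S2; congr (_ + _); apply: eq_bigr => j _.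
    by rewrite /t L.
  by rewrite /t Rr.
rewrite big_split_ord /= X1 X2; congr (_ + _); apply: eq_bigr => j _.
  by rewrite /t /p L.
by rewrite /t /p Rr.
Qed.

Lemma wsum_scale S s x c : 0 <= c -> wsum S s x -> wsum S (c * s) (c *: x).
Proof.
move=> c0 [k [p [t [P [T [Sx X]]]]]].
exists k, p, (fun i => c * t i); split => //; split; first by move=> i; rewrite mulr_ge0.
split; first by rewrite -mulr_sumr Sx.
by rewrite X scaler_sumr; apply: eq_bigr => i _; rewrite scalerA.
Qed.

Lemma wsum_pt S y : S y -> wsum S 1 y.
Proof.
move=> Sy; exists 1%N, (fun _ => y), (fun _ => 1); split => //; split => // ; split.
  by rewrite big_ord1.
by rewrite big_ord1 scale1r.
Qed.

Lemma conv_wsum S x : conv S x <-> wsum S 1 x.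
Proof. by []. Qed.

Lemma conv_conv S T x : (forall y, S y -> conv T y) -> conv S x -> conv T x.
Proof.
move=> ST [k [p [t [P [T0 [S1 ->]]]]]]; apply/conv_wsum; rewrite -S1.
elim: k p t P T0 {S1} => [|k IH] p t P T0.
  rewrite !big_ord0; exact: wsum0.
rewrite !big_ord_recr /=; apply: wsum_add.
  by apply: IH => i; [apply: P|apply: T0].
have := wsum_scale (T0 ord_max) (ST _ (P ord_max)); rewrite mulr1; apply.
Qed.

Lemma conv_pt S y : S y -> conv S y.
Proof. by move=> /wsum_pt. Qed.

Lemma conv_bin S x y t : conv S x -> conv S y -> 0 <= t <= 1 ->
  conv S ((1 - t) *: x + t *: y).
Proof.
move=> /conv_wsum Hx /conv_wsum Hy /andP[t0 t1]; apply/conv_wsum.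
have t1' : 0 <= 1 - t by rewrite subr_ge0.
have := wsum_add (wsum_scale t1' Hx) (wsum_scale t0 Hy).
by rewrite !mulr1 subrK.
Qed.

Lemma conv_refl S a x : (forall y, S y -> S (refl a y)) -> conv S x -> conv S (refl a x).
Proof.
move=> HS [k [p [t [P [T0 [S1 ->]]]]]].
exists k, (fun i => refl a (p i)), t; split; first by move=> i; apply: HS.
do 2!split => //; rewrite refl_sum; apply: eq_bigr => i _; exact: refl_scale.
Qed.

Lemma conv_shift S v x : conv S x ->
  conv (fun y => exists z, S z /\ y = v + z) (v + x).
Proof.
move=> [k [p [t [P [T0 [S1 ->]]]]]].
exists k, (fun i => v + p i), t; split; first by move=> i; exists (p i).
do 2!split => //.
under [RHS]eq_bigr => i _ do rewrite scalerDr.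
by rewrite big_split /= -scaler_suml S1 scale1r.
Qed.
End Conv.
Unset Implicit Arguments.

Theorem mainTheorem2 (R : realType) (n : nat) (Phi Delta : seq 'rV[R]_n)
    (l1 l2 l3 l4 : 'rV[R]_n) :
  is_simple_root_system Phi ->
  is_base Phi Delta ->
  dominant_weight Phi Delta l1 -> dominant_weight Phi Delta l2 ->
  dominant_weight Phi Delta l3 -> dominant_weight Phi Delta l4 ->
  l1 + l2 = l3 + l4 ->
  (forall a, positive_root Phi Delta a ->
     `|pairing (l1 - l2) a| <= `|pairing (l3 - l4) a|) ->
  psubset (Ppoly Phi l1 l2) (fund_chamber Delta) ->
  psubset (Ppoly Phi l3 l4) (fund_chamber Delta) ->
  psubset (Ppoly Phi l3 l4) (Ppoly Phi l1 l2).
Proof.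
move=> RS BS [_ f1] [_ f2] [_ f3] [_ f4] Hsum Hpair H12 H34.
have anzD a : a \in Delta -> a != 0 by move=> /(Delta_Phi BS) /(Phi_nz RS).
have refl_weyl a w : a \in Phi -> weyl_elt Phi w -> weyl_elt Phi (fun x => refl a (w x)).
  move=> aP [s [sP sE]]; exists (a :: s); split.
    by move=> x; rewrite inE => /orP[/eqP ->|/sP].
  by move=> x /=; rewrite sE.
have id_weyl : weyl_elt Phi id by exists [::].
have dom12 a : a \in Delta -> pairing l2 a <= pairing l1 a.
  move=> aD; have aP := Delta_Phi BS aD.
  have : fund_chamber Delta (l1 + refl a l2).
    apply: H12; apply: conv_pt; exists (fun x => refl a x); split => //.
    exact: (refl_weyl a id aP id_weyl).
  move=> /(_ a aD); rewrite pairingDl pairing_refll ?anzD //; lra.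
have dom34 a : a \in Delta -> pairing l4 a <= pairing l3 a.
  move=> aD; have aP := Delta_Phi BS aD.
  have : fund_chamber Delta (l3 + refl a l4).
    apply: H34; apply: conv_pt; exists (fun x => refl a x); split => //.
    exact: (refl_weyl a id aP id_weyl).
  move=> /(_ a aD); rewrite pairingDl pairing_refll ?anzD //; lra.
pose d := l3 - l1.
have l4E : l4 = l1 + l2 - l3 by rewrite Hsum addrAC subrr add0r.
have fd : fund_chamber Delta d.
  move=> a aD; have := Hpair a (posr_Delta BS aD).
  have h12 := dom12 a aD; have h34 := dom34 a aD.
  rewrite !pairingBl !ger0_norm ?subr_ge0 //.
  have : pairing (l1 + l2) a = pairing (l3 + l4) a by rewrite Hsum.
  rewrite !pairingDl; lra.
pose K := conv (fun z => exists w, weyl_elt Phi w /\ z = w l2).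
have Kr a y : a \in Phi -> K y -> K (refl a y).
  move=> aP; apply: conv_refl => z [w [wW ->]].
  by exists (fun x => refl a (w x)); split => //; exact: refl_weyl.
have Kp a y t : a \in Phi -> K y -> 0 <= t <= 1 -> K (y - (t * pairing y a) *: a).
  move=> aP Ky tb; have := conv_bin Ky (Kr a y aP Ky) tb.
  have -> : (1 - t) *: y + t *: refl a y = y - (t * pairing y a) *: a.
    by rewrite /refl; apply/rowP => j; rewrite !mxE; ring.
  done.
have K0 : K (d + l4).
  apply: conv_pt; exists id; split => //.
  by rewrite /d l4E /=; apply/rowP => j; rewrite !mxE; ring.
have Kall := orbit_all RS BS Kr Kp fd f4 K0.
move=> x Hx; apply: (conv_conv _ Hx) => y [w [[s [sP sE]] ->]].
have [t [tD tE]] := simple_word RS BS sP.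
have Hy : l3 + w l4 = l1 + (d + act t l4).
  by rewrite tE /act -sE /d addrA addrCA subrr addr0.
rewrite Hy; have := conv_shift l1 (Kall t tD).
apply: conv_conv => z [z' [[w' [w'W ->]] ->]].
by apply: conv_pt; exists w'.
Qed.
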